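(* Let $T$ be a triangulation of the oriented 2-sphere (a simplicial complex), $R$ its vertex–edge incidence matrix ($R_{v,e}=1$ if $v\in e$, else $0$), and $E$ the edge–edge matrix defined below. Then $R\cdot E=0$.
   Context: $E=(E_{e,e'})_{e,e'\in\mathcal E(T)}$: if $e\neq e'$ lie in a common face whose edges in positive cyclic order are $\{a,b\},\{b,c\},\{c,a\}$, then $E_{e,e'}=-1$ if $e'$ immediately follows $e$ and $+1$ if $e'$ immediately precedes $e$; otherwise $E_{e,e'}=0$. *)

(* Defs.v *)
From mathcomp Require Import all_boot all_order all_algebra.
Set Implicit Arguments. Unset Strict Implicit. Unset Printing Implicit Defensive.
Import GRing.Theory Num.Theory.
Local Open Scope ring_scope.

Section Triang.
Variable V : finType.

(* A 2-dimensional simplicial complex on vertex set V is given by its set of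
   triangles F (2-simplices); its edges are the 2-element subsets of triangles. *)
Definition edges (F : {set {set V}}) : {set {set V}} :=
  [set e : {set V} | (#|e| == 2)%N && [exists f in F, e \subset f]].

Definition vadj (F : {set {set V}}) : rel V :=
  fun u w => [exists f in F, (u \in f) && (w \in f)].

Definition linkrel (F : {set {set V}}) (v : V) : rel V :=
  fun u w => [set u; v; w] \in F.

Definition in_link (F : {set {set V}}) (v u : V) : bool :=
  (u != v) && [exists f in F, (u \in f) && (v \in f)].

(* Combinatorial triangulation of the 2-sphere: a pure 2-dimensional finite
   simplicial complex with vertex set V which is a closed combinatorial surface
   (every edge in exactly two triangles, every vertex link a single cycle),
   connected, with Euler characteristic 2. *)
Definition sphere_triangulation (F : {set {set V}}) : Prop :=
  [/\ forall f, f \in F -> #|f| = 3%N,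
      forall v : V, (exists2 f, f \in F & v \in f),
      forall e, e \in edges F -> #|[set f in F | e \subset f]| = 2%N,
      forall v u w, in_link F v u -> in_link F v w -> connect (linkrel F v) u w
    & [/\ forall u w : V, connect (vadj F) u w
        & (#|V|%:Z - #|edges F|%:Z + #|F|%:Z = 2)%R]].

(* oriented triangle (a,b,c) = triangle {a,b,c} with cyclic order a -> b -> c *)
Definition face_of (t : V * V * V) : {set V} := [set t.1.1; t.1.2; t.2].

(* An orientation: for every triangle the set of ordered triples listing it in
   its positive cyclic order (closed under cyclic rotation, exactly one of the
   two cyclic orders), coherent: each directed edge (a,b) is traversed by at most
   one positively oriented triangle. *)
Definition orientation (F : {set {set V}}) (O : {set V * V * V}) : Prop :=
  [/\ forall t, t \in O -> face_of t \in F,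
      forall f, f \in F -> exists2 t, t \in O & face_of t = f,
      forall a b c, (a, b, c) \in O -> (b, c, a) \in O,
      forall a b c, (a, b, c) \in O -> (a, c, b) \notin O
    & forall a b c c', (a, b, c) \in O -> (a, b, c') \in O -> c = c'].

Definition incR (v : V) (e : {set V}) : int := (v \in e)%:R.

Definition edgeE (O : {set V * V * V}) (e e' : {set V}) : int :=
  if [exists t in O, (e == [set t.1.1; t.1.2]) && (e' == [set t.1.2; t.2])]
  then -1
  else if [exists t in O, (e' == [set t.1.1; t.1.2]) && (e == [set t.1.2; t.2])]
  then 1 else 0.

End Triang.

(* Main.v *)
Require Import Defs.
From mathcomp Require Import all_boot all_order all_algebra.
Import GRing.Theory Num.Theory.
Local Open Scope ring_scope.

Lemma card3_neq {V : finType} (a b c : V) :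
  #|[set a; b; c]| = 3%N -> [/\ a != b, b != c & a != c].
Proof.
rewrite -setUA cardsU1 cards2 !inE negb_or.
case: (a == b); case: (a == c); case: (b == c) => //.
Qed.

Lemma set2_eq {V : finType} (x y a b : V) : x != y ->
  [set a; b] = [set x; y] -> (a = x /\ b = y) \/ (a = y /\ b = x).
Proof.
move=> xy H.
have ha : a \in [set x; y] by rewrite -H set21.
have hb : b \in [set x; y] by rewrite -H set22.
have hx : x \in [set a; b] by rewrite H set21.
have hy : y \in [set a; b] by rewrite H set22.
move: ha hb hx hy; rewrite !inE.
case/orP=> /eqP ->; case/orP=> /eqP -> //; rewrite ?eqxx ?orbb /=.
- by move=> _ /eqP yx; move: xy; rewrite yx eqxx.
- by left.
- by right.
- by move=> /eqP xy'; move: xy; rewrite xy' eqxx.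
Qed.

Lemma orient_face {V : finType} {F : {set {set V}}} {O : {set V * V * V}} f x y :
  (forall f, f \in F -> #|f| = 3%N) -> orientation F O ->
  f \in F -> x \in f -> y \in f -> x != y ->
  (exists z, (x, y, z) \in O /\ face_of (x, y, z) = f) \/
  (exists z, (y, x, z) \in O /\ face_of (y, x, z) = f).
Proof.
move=> Fc [Of Oex Orot _ _] fF xf yf xy.
case: (Oex f fF) => [[[a b] c]] tO ft.
have := Fc f fF; rewrite -ft /face_of /= => /card3_neq [ab bc ac].
have r1 := Orot _ _ _ tO; have r2 := Orot _ _ _ r1.
move: xf yf xy; rewrite -ft /face_of /= !inE.
have fs : forall p q r : V, [set p; q; r] = [set q; r; p].
  by move=> p q r; apply/setP => z; rewrite !inE; case: (z == p); case: (z == q); case: (z == r).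
case/orP=> [/orP[]|] /eqP ->; case/orP=> [/orP[]|] /eqP -> //; rewrite ?eqxx // => _.
- by left; exists c; split => //; rewrite /face_of /=.
- by right; exists b; split => //; rewrite /face_of /= fs.
- by right; exists c; split => //; rewrite /face_of /=.
- by left; exists a; split => //; rewrite /face_of /= fs.
- by left; exists b; split => //; rewrite /face_of /= fs fs.
- by right; exists a; split => //; rewrite /face_of /= fs.
Qed.

Theorem lemma1 (V : finType) (F : {set {set V}}) (O : {set V * V * V}) :
  sphere_triangulation F -> orientation F O ->
  forall (v : V) (e' : {set V}), e' \in edges F ->
    \sum_(e in edges F) incR v e * edgeE O e e' = 0.
Proof.
move=> [Fc _ Fe _ _] HO v e' He'.
have HO' := HO; case: HO' => [Of Oex Orot Oanti Ocoh].
have := Fe _ He'.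
move: He'; rewrite inE => /andP [/cards2P [x [y [xy ->]]] _] /eqP /cards2P.
case=> [f1 [f2 [f12 Hs]]].
have : f1 \in [set f in F | [set x; y] \subset f] by rewrite Hs set21.
rewrite inE => /andP [f1F /subsetP s1].
have : f2 \in [set f in F | [set x; y] \subset f] by rewrite Hs set22.
rewrite inE => /andP [f2F /subsetP s2].
have [c [d [cO dO]]] : exists c d, (x, y, c) \in O /\ (y, x, d) \in O.
  have o1 := orient_face _ _ _ Fc HO f1F (s1 _ (set21 _ _)) (s1 _ (set22 _ _)) xy.
  have o2' := orient_face _ _ _ Fc HO f2F (s2 _ (set21 _ _)) (s2 _ (set22 _ _)) xy.
  case: o1 o2' => [[p [pO pf]]|[p [pO pf]]] [[q [qO qf]]|[q [qO qf]]].
  - by move: f12; rewrite -pf -qf (Ocoh _ _ _ _ pO qO) eqxx.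
  - by exists p, q.
  - by exists q, p.
  - by move: f12; rewrite -pf -qf (Ocoh _ _ _ _ pO qO) eqxx.
have := Fc _ (Of _ cO); rewrite /face_of /= => /card3_neq [_ yc xc].
have := Fc _ (Of _ dO); rewrite /face_of /= => /card3_neq [_ xd yd].
have cd : c != d.
  apply/eqP => E; subst d.
  by move: (Oanti _ _ _ (Orot _ _ _ (Orot _ _ _ cO))); rewrite (Orot _ _ _ (Orot _ _ _ dO)).
have cx : c != x by rewrite eq_sym.
have dy : d != y by rewrite eq_sym.
have rc := Orot _ _ _ (Orot _ _ _ cO).
have rd := Orot _ _ _ (Orot _ _ _ dO).
have E1 : forall e, [exists t in O, (e == [set t.1.1; t.1.2]) && ([set x; y] == [set t.1.2; t.2])]
   = (e == [set c; x]) || (e == [set d; y]).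
  move=> e; apply/existsP/idP.
  - case=> [[[a b] z]] /= /and3P [tO /eqP -> /eqP H].
    have r := Orot _ _ _ tO.
    case: (set2_eq _ _ _ _ xy (esym H)) => [[bx zy]|[by' zx]]; subst.
    + by rewrite (Ocoh _ _ _ _ r cO) eqxx.
    + by rewrite (Ocoh _ _ _ _ r dO) eqxx orbT.
  - case/orP => /eqP ->; [exists (c, x, y) | exists (d, y, x)]; rewrite /= ?eqxx ?andbT //.
    by rewrite rd /=; apply/eqP/setP => z; rewrite !inE orbC.
have E2 : forall e, [exists t in O, ([set x; y] == [set t.1.1; t.1.2]) && (e == [set t.1.2; t.2])]
   = (e == [set y; c]) || (e == [set x; d]).
  move=> e; apply/existsP/idP.
  - case=> [[[a b] z]] /= /and3P [tO /eqP H /eqP ->].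
    case: (set2_eq _ _ _ _ xy (esym H)) => [[ax b_y]|[ay bx]]; subst.
    + by rewrite (Ocoh _ _ _ _ tO cO) eqxx.
    + by rewrite (Ocoh _ _ _ _ tO dO) eqxx orbT.
  - case/orP => /eqP ->; [exists (x, y, c) | exists (y, x, d)]; rewrite /= ?eqxx ?andbT //.
    by rewrite ?cO ?dO /=; apply/eqP/setP => z; rewrite !inE orbC.
have ne : forall (a b p q : V), p != q -> ~~ ((a == p) && (b == q)) -> ~~ ((a == q) && (b == p)) ->
    ([set a; b] == [set p; q]) = false.
  move=> a b p q pq h1 h2; apply/negbTE/eqP => H.
  by case: (set2_eq _ _ _ _ pq H) => [[E3 E4]|[E3 E4]]; subst; rewrite !eqxx ?andbT in h1 h2.
have key : forall e, edgeE O e [set x; y] =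
   (e == [set y; c])%:R + (e == [set x; d])%:R - (e == [set c; x])%:R - (e == [set d; y])%:R.
  move=> e; rewrite /edgeE E1 E2.
  have nn : forall (b : bool), b = false -> b = false by [].
  have yx : y != x by rewrite eq_sym.
  have cy : c != y by rewrite eq_sym.
  have dx : d != x by rewrite eq_sym.
  have dc : d != c by rewrite eq_sym.
  have R := (negbTE xy, negbTE yx, negbTE yc, negbTE cy, negbTE xc, negbTE cx,
             negbTE xd, negbTE dx, negbTE yd, negbTE dy, negbTE cd, negbTE dc).
  have n12 : ([set y; c] == [set x; d]) = false by apply: ne; rewrite ?R ?andbF.
  have n13 : ([set y; c] == [set c; x]) = false by apply: ne; rewrite ?R ?andbF.
  have n14 : ([set y; c] == [set d; y]) = false by apply: ne; rewrite ?R ?andbF.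
  have n23 : ([set x; d] == [set c; x]) = false by apply: ne; rewrite ?R ?andbF.
  have n24 : ([set x; d] == [set d; y]) = false by apply: ne; rewrite ?R ?andbF.
  have n34 : ([set c; x] == [set d; y]) = false by apply: ne; rewrite ?R ?andbF.
  have N := (n12, n13, n14, n23, n24, n34).
  have m1 : ([set x; d] == [set y; c]) = false by rewrite eq_sym.
  have m2 : ([set c; x] == [set y; c]) = false by rewrite eq_sym.
  have m3 : ([set d; y] == [set y; c]) = false by rewrite eq_sym.
  have m4 : ([set c; x] == [set x; d]) = false by rewrite eq_sym.
  have m5 : ([set d; y] == [set x; d]) = false by rewrite eq_sym.
  have m6 : ([set d; y] == [set c; x]) = false by rewrite eq_sym.
  have M := (m1, m2, m3, m4, m5, m6).
  case: (eqVneq e [set c; x]) => [->|/negbTE h3]; first by rewrite /= ?N ?M.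
  case: (eqVneq e [set d; y]) => [->|/negbTE h4]; first by rewrite /= ?N ?M ?orbT.
  case: (eqVneq e [set y; c]) => [->|/negbTE h1]; first by rewrite /= ?N ?M.
  by case: (e == [set x; d]); rewrite /=.
have mem : forall a b f, f \in F -> a \in f -> b \in f -> a != b -> [set a; b] \in edges F.
  move=> a b f fF af bf ab; rewrite inE cards2 ab /=; apply/existsP; exists f.
  by rewrite fF; apply/subsetP => z; rewrite !inE => /orP [] /eqP ->.
have fc := Of _ cO; have fd := Of _ dO.
have e1 : [set y; c] \in edges F by apply: (mem _ _ _ fc); rewrite // !inE eqxx ?orbT.
have e2 : [set x; d] \in edges F by apply: (mem _ _ _ fd); rewrite // !inE eqxx ?orbT.
have e3 : [set c; x] \in edges F by apply: (mem _ _ _ fc); rewrite // !inE eqxx ?orbT.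
have e4 : [set d; y] \in edges F by apply: (mem _ _ _ fd); rewrite // !inE eqxx ?orbT.
have sumE : forall s, s \in edges F ->
    \sum_(e in edges F) incR v e * (e == s)%:R = incR v s.
  move=> s sE; rewrite (bigD1 s) //= eqxx mulr1 big1 ?addr0 // => e /andP [_ /negbTE ->].
  by rewrite mulr0.
under eq_bigr => e _ do rewrite key mulrBr mulrBr mulrDr.
rewrite !sumrB big_split /= !sumE //.
rewrite /incR !inE.
have yx : y != x by rewrite eq_sym.
have cy : c != y by rewrite eq_sym.
have dx : d != x by rewrite eq_sym.
have dc : d != c by rewrite eq_sym.
have fin : forall (a b c' d' : bool), (a%:R + b%:R - c'%:R - d'%:R = 0 :> int) <-> (a + b = c' + d')%N.
  by case; case; case; case.
case: (eqVneq v x) => [->|vx]; first by apply/fin; rewrite ?eqxx ?(negbTE xy, negbTE xc, negbTE xd).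
case: (eqVneq v y) => [->|vy]; first by apply/fin; rewrite ?eqxx ?(negbTE yx, negbTE yc, negbTE yd).
rewrite /=.
case: (eqVneq v c) => [->|vc]; first by apply/fin; rewrite ?(negbTE cd).
rewrite /=.
by rewrite orbF add0r subr0 subrr.
Qed.
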